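(* Let ${}^*\mathbb{Q}$ be a field elementarily equivalent to $\mathbb{Q}$ (in the ring language), with ${}^*\mathbb{Z}$, ${}^*\mathbb{N}$, $\mathcal{P}({}^*\mathbb{N})$, the maps $d_p$ and the order $<$ as described in the context. For $a_0,a_1\in{}^*\mathbb{Q}\setminus\{0\}$, we have $a_0=a_1$ if and only if $d_p(a_0)=d_p(a_1)$ for all $p\in\mathcal{P}({}^*\mathbb{N})$ and $a_0a_1>0$. Equivalently, the map ${}^*\mathbb{Q}\setminus\{0\}\to\prod_{p\in\mathcal{P}({}^*\mathbb{N})}p^{{}^*\mathbb{Z}}\times\{\pm1\}$, $a\mapsto((d_p(a))_p,\operatorname{sgn}(a))$, is an injective group homomorphism, where $\operatorname{sgn}(a)=1$ if $a>0$ and $-1$ if $a<0$.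
   Context: Fix a first-order formula $Z(x)$ in the ring language defining $\mathbb{Z}$ in $\mathbb{Q}$ (such exists by J. Robinson). Let ${}^*\mathbb{Z}=Z({}^*\mathbb{Q})$ and let ${}^*\mathbb{N}$ be the set of elements of ${}^*\mathbb{Q}$ that are sums of four squares of elements of ${}^*\mathbb{Z}$. For $x,y\in{}^*\mathbb{Z}$, $x\mid y$ means $y=zx$ for some $z\in{}^*\mathbb{Z}$, $z\neq0$. $\mathcal{P}({}^*\mathbb{N})$ is the set of $p\in{}^*\mathbb{N}$, $p\ne1$, whose only divisors in ${}^*\mathbb{Z}$ are $\pm1,\pm p$. For such $p$, $p^{{}^*\mathbb{N}}$ is the set of $y\in{}^*\mathbb{N}$ such that $y=1$ or every $z\in{}^*\mathbb{N}$, $z\neq\pm1$, with $z\mid y$ satisfies $p\mid z$; and $p^{{}^*\mathbb{Z}}=p^{{}^*\mathbb{N}}\cup\{1/x:x\in p^{{}^*\mathbb{N}}\}$, a group under multiplication. For $x\in{}^*\mathbb{Z}\setminus\{0\}$, $d_p(x)$ is the unique $y\in p^{{}^*\mathbb{N}}$ with $y\mid x$ and $py\nmid x$; it is extended to ${}^*\mathbb{Q}\setminus\{0\}$ by $d_p(a/b)=d_p(a)/d_p(b)$ for $a,b\in{}^*\mathbb{Z}\setminus\{0\}$. The order on ${}^*\mathbb{Q}$: for $a_1,a_2\in{}^*\mathbb{Z}$ and $b_1,b_2\in{}^*\mathbb{N}\setminus\{0\}$, $a_1/b_1<a_2/b_2$ iff $a_2b_1-a_1b_2\in{}^*\mathbb{N}$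 (and they are distinct). *)

(* Defs.v *)
From HB Require Import structures.
From mathcomp Require Import all_boot all_order all_algebra.
From Stdlib Require Import ClassicalEpsilon.
Set Implicit Arguments. Unset Strict Implicit. Unset Printing Implicit Defensive.
Import Order.TTheory GRing.Theory Num.Theory.
Local Open Scope ring_scope.

(* Sentences/formulas of the pure ring language: MathComp's reified formulas
   with constants ranging over the empty type (so no parameters).           *)
Definition of_empty (T : Type) (e : Empty_set) : T := match e with end.

Fixpoint tmap (A B : Type) (f : A -> B) (t : GRing.term A) : GRing.term B :=
  match t with
  | GRing.Var n => @GRing.Var B n
  | GRing.Const x => @GRing.Const B (f x)
  | GRing.NatConst n => @GRing.NatConst B n
  | GRing.Add t1 t2 => GRing.Add (tmap f t1) (tmap f t2)
  | GRing.Opp t1 => GRing.Opp (tmap f t1)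
  | GRing.NatMul t1 n => GRing.NatMul (tmap f t1) n
  | GRing.Mul t1 t2 => GRing.Mul (tmap f t1) (tmap f t2)
  | GRing.Inv t1 => GRing.Inv (tmap f t1)
  | GRing.Exp t1 n => GRing.Exp (tmap f t1) n
  end.

Fixpoint fmap (A B : Type) (f : A -> B) (g : GRing.formula A) : GRing.formula B :=
  match g with
  | GRing.Bool b => @GRing.Bool B b
  | GRing.Equal t1 t2 => GRing.Equal (tmap f t1) (tmap f t2)
  | GRing.Unit t1 => GRing.Unit (tmap f t1)
  | GRing.And g1 g2 => GRing.And (fmap f g1) (fmap f g2)
  | GRing.Or g1 g2 => GRing.Or (fmap f g1) (fmap f g2)
  | GRing.Implies g1 g2 => GRing.Implies (fmap f g1) (fmap f g2)
  | GRing.Not g1 => GRing.Not (fmap f g1)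
  | GRing.Exists n g1 => GRing.Exists n (fmap f g1)
  | GRing.Forall n g1 => GRing.Forall n (fmap f g1)
  end.

Definition ring_formula := GRing.formula Empty_set.

Definition sat (R : unitRingType) (e : seq R) (phi : ring_formula) : Prop :=
  GRing.holds e (fmap (@of_empty R) phi).

Definition elem_equiv_Q (F : fieldType) : Prop :=
  forall phi : ring_formula, sat (R := F) [::] phi <-> sat (R := rat) [::] phi.

Definition defines_Z_in_Q (Zf : ring_formula) : Prop :=
  forall x : rat, sat [:: x] Zf <-> exists z : int, x = z%:~R.

Section StarQ.
Variables (F : fieldType) (Zf : ring_formula).

Definition sZ (x : F) : Prop := sat [:: x] Zf.

Definition sN (x : F) : Prop :=
  exists a b c d, [/\ sZ a, sZ b, sZ c & sZ d] /\
                  x = a ^+ 2 + b ^+ 2 + c ^+ 2 + d ^+ 2.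

Definition sdvd (x y : F) : Prop :=
  sZ x /\ sZ y /\ exists z, sZ z /\ z != 0 /\ y = z * x.

Definition sprime (p : F) : Prop :=
  sN p /\ p != 1 /\
  forall d, sZ d -> sdvd d p -> d = 1 \/ d = -1 \/ d = p \/ d = - p.

Definition spowN (p y : F) : Prop :=
  sN y /\ (y = 1 \/ forall z, sN z -> z != 1 -> z != -1 -> sdvd z y -> sdvd p z).

Definition dpZ (p x : F) : F :=
  epsilon (inhabits 0) (fun y => spowN p y /\ sdvd y x /\ ~ sdvd (p * y) x).

Definition dp (p a : F) : F :=
  let ab := epsilon (inhabits (0, 0))
              (fun ab : F * F => [/\ sZ ab.1, sZ ab.2, ab.1 != 0, ab.2 != 0
                                  & a = ab.1 / ab.2]) in
  dpZ p ab.1 / dpZ p ab.2.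

Definition slt (x y : F) : Prop :=
  exists a1 b1 a2 b2,
    [/\ sZ a1, sZ a2, sN b1 /\ b1 != 0, sN b2 /\ b2 != 0 &
        x = a1 / b1 /\ y = a2 / b2] /\
    sN (a2 * b1 - a1 * b2) /\ x != y.

End StarQ.

(* Main.v *)
Require Import Defs.
From HB Require Import structures.
From mathcomp Require Import all_boot all_order all_algebra.
From mathcomp Require Import zify ring lra.
From Stdlib Require Import ClassicalEpsilon.
Import Order.TTheory GRing.Theory Num.Theory.
Local Open Scope ring_scope.

Lemma prime_no_mid (p : nat) (M s : int) : prime p -> 1 < M -> M < p%:Z ->
  p%:Z = M * s -> False.
Proof.
move=> pp hM1 hMp hs.
have hd : (M %| p%:Z)%Z by apply/dvdzP; exists s; lia.
move: hd; rewrite /dvdz /= => hd.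
have := prime_nt_dvdP pp _ hd.
have hne : `|M|%N != 1%N by lia.
move=> /(_ hne) /eqP. lia.
Qed.

Definition sq4 (x1 x2 x3 x4 : int) := x1^+2 + x2^+2 + x3^+2 + x4^+2.

Lemma descent_step (p : nat) (M : int) (x1 x2 x3 x4 : int) : prime p ->
  1 < M -> M < p%:Z -> sq4 x1 x2 x3 x4 = M * p%:Z ->
  exists r : int, [/\ 0 < r, r < M & exists w1 w2 w3 w4, sq4 w1 w2 w3 w4 = r * p%:Z].
Proof.
move=> pp hM1 hMp hx.
have [k hk] : exists k : int, 2*k + 1 <= M <= 2*k+2.
  exists ((M-1) %/ 2)%Z; lia.
pose t i := ((i + k) %/ M)%Z. pose y i := ((i + k) %% M)%Z - k.
have hy : forall i, [/\ i = y i + M * t i, - k <= y i & y i <= M - 1 - k].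
  move=> i; rewrite /y /t.
  have h1 := divz_eq (i + k) M.
  have h2 : M != 0 by lia.
  have h3 := modz_ge0 (i + k) h2.
  have h4 : 0 < M by lia.
  have h5 := ltz_pmod (i + k) h4.
  move: h1 h3 h5; move: ((i + k) %/ M)%Z ((i + k) %% M)%Z => a b.
  split; lia.
have [e1 l1 u1] := hy x1; have [e2 l2 u2] := hy x2.
have [e3 l3 u3] := hy x3; have [e4 l4 u4] := hy x4.
move: (y x1) (y x2) (y x3) (y x4) (t x1) (t x2) (t x3) (t x4) e1 e2 e3 e4 l1 l2 l3 l4 u1 u2 u3 u4.
move=> y1 y2 y3 y4 t1 t2 t3 t4 e1 e2 e3 e4 l1 l2 l3 l4 u1 u2 u3 u4.
move: hx; rewrite e1 e2 e3 e4 => hx.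
pose P := p%:Z.
pose r := P - 2 * ((y1 + M*t1)*t1 + (y2 + M*t2)*t2 + (y3 + M*t3)*t3 + (y4 + M*t4)*t4)
          + M * (t1^+2 + t2^+2 + t3^+2 + t4^+2).
have hr : sq4 y1 y2 y3 y4 = M * r.
  have -> : sq4 y1 y2 y3 y4 = sq4 (y1 + M * t1) (y2 + M * t2) (y3 + M * t3) (y4 + M * t4)
     - 2 * M * ((y1 + M*t1)*t1 + (y2 + M*t2)*t2 + (y3 + M*t3)*t3 + (y4 + M*t4)*t4)
          + M ^+ 2 * (t1^+2 + t2^+2 + t3^+2 + t4^+2) by rewrite /sq4; ring.
  rewrite hx /r /P; ring.
have sqb : forall yy : int, - k <= yy -> yy <= M - 1 - k -> 4 * yy^+2 <= M^+2.
  move=> yy hl hu; clear -hl hu hk.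
  have ha : 0 <= M - 2 * yy by lia.
  have hb : 0 <= M + 2 * yy by lia.
  have := mulr_ge0 ha hb.
  have -> : (M - 2 * yy) * (M + 2 * yy) = M^+2 - 4 * yy^+2 by ring.
  lia.
have b1 := sqb _ l1 u1. have b2 := sqb _ l2 u2.
have b3 := sqb _ l3 u3. have b4 := sqb _ l4 u4.
have s1 := sqr_ge0 y1. have s2 := sqr_ge0 y2.
have s3 := sqr_ge0 y3. have s4 := sqr_ge0 y4.
have hM0 : 0 < M by clear -hM1; lia.
have hr0 : 0 <= r.
  by rewrite -(pmulr_rge0 _ hM0) -hr /sq4 !addr_ge0 ?sqr_ge0.
have hrM : r <= M.
  rewrite -(ler_pM2l hM0) -hr /sq4 -expr2.
  clear -b1 b2 b3 b4; lia.
have [r0|rpos] := eqVneq r 0.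
  have hy0 : y1 = 0 /\ y2 = 0 /\ y3 = 0 /\ y4 = 0.
    move: hr; rewrite r0 mulr0 /sq4 => hr.
    have q1 : y1 ^+ 2 = 0 by clear -hr s1 s2 s3 s4; lia.
    have q2 : y2 ^+ 2 = 0 by clear -hr s1 s2 s3 s4; lia.
    have q3 : y3 ^+ 2 = 0 by clear -hr s1 s2 s3 s4; lia.
    have q4 : y4 ^+ 2 = 0 by clear -hr s1 s2 s3 s4; lia.
    have sq0 : forall z : int, z ^+ 2 = 0 -> z = 0.
      by move=> z /eqP; rewrite sqrf_eq0 => /eqP.
    by rewrite (sq0 _ q1) (sq0 _ q2) (sq0 _ q3) (sq0 _ q4).
  case: hy0 => z1 [z2 [z3 z4]]; move: hx; rewrite z1 z2 z3 z4 => hx.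
  exfalso; apply: (@prime_no_mid p M (t1^+2 + t2^+2 + t3^+2 + t4^+2) pp hM1 hMp).
  have hM0' : M != 0 by clear -hM1; lia.
  apply: (mulfI hM0'); rewrite -hx /sq4; ring.
have [rM|rltM] := eqVneq r M.
  have eqb : forall yy : int, - k <= yy -> yy <= M - 1 - k -> 4 * yy^+2 = M^+2 ->
     yy = k + 1 /\ M = 2 * k + 2.
    move=> yy hl hu he; clear -hl hu he hk.
    have : (M - 2 * yy) * (M + 2 * yy) = 0.
      have -> : (M - 2 * yy) * (M + 2 * yy) = M^+2 - 4 * yy^+2 by ring.
      by rewrite he subrr.
    move/eqP; rewrite mulf_eq0 => /orP [] /eqP; lia.
  move: hr; rewrite rM /sq4 => hr.
  have MM : M * M = M ^+ 2 by rewrite expr2.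
  rewrite MM in hr.
  have [z1 zM] := eqb _ l1 u1 ltac:(clear -hr b1 b2 b3 b4; lia).
  have [z2 _] := eqb _ l2 u2 ltac:(clear -hr b1 b2 b3 b4; lia).
  have [z3 _] := eqb _ l3 u3 ltac:(clear -hr b1 b2 b3 b4; lia).
  have [z4 _] := eqb _ l4 u4 ltac:(clear -hr b1 b2 b3 b4; lia).
  move: hx; rewrite z1 z2 z3 z4 => hx.
  exfalso; apply: (@prime_no_mid p M (1 + t1*(t1+1) + t2*(t2+1) + t3*(t3+1) + t4*(t4+1)) pp hM1 hMp).
  have hk0 : M != 0 by clear -hM1; lia.
  apply: (mulfI hk0); rewrite -hx /sq4 zM; ring.
exists r; split; [clear -hr0 rpos; lia | clear -hrM rltM; lia |].
pose w1 := r + (t1*y1 + t2*y2 + t3*y3 + t4*y4).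
pose w2 := t1*y2 - t2*y1 + t3*y4 - t4*y3.
pose w3 := t1*y3 - t3*y1 + t4*y2 - t2*y4.
pose w4 := t1*y4 - t4*y1 + t2*y3 - t3*y2.
exists w1, w2, w3, w4.
have hM2 : M ^+ 2 != 0 by rewrite expf_neq0 //; clear -hM1; lia.
apply: (mulfI hM2).
have ez1 : (y1 + M*t1)*y1 + (y2 + M*t2)*y2 + (y3 + M*t3)*y3 + (y4 + M*t4)*y4 = M * w1.
  have -> : (y1 + M*t1)*y1 + (y2 + M*t2)*y2 + (y3 + M*t3)*y3 + (y4 + M*t4)*y4 =
     sq4 y1 y2 y3 y4 + M * (t1*y1 + t2*y2 + t3*y3 + t4*y4) by rewrite /sq4; ring.
  by rewrite hr /w1; ring.
have euler : sq4 (y1 + M * t1) (y2 + M * t2) (y3 + M * t3) (y4 + M * t4) * sq4 y1 y2 y3 y4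
  = ((y1 + M*t1)*y1 + (y2 + M*t2)*y2 + (y3 + M*t3)*y3 + (y4 + M*t4)*y4)^+2
    + (M * w2)^+2 + (M * w3)^+2 + (M * w4)^+2 by rewrite /sq4 /w2 /w3 /w4; ring.
rewrite hx hr ez1 in euler.
have -> : M ^+ 2 * sq4 w1 w2 w3 w4 = (M * w1)^+2 + (M * w2)^+2 + (M * w3)^+2 + (M * w4)^+2.
  by rewrite /sq4; ring.
rewrite -euler /P; ring.
Qed.

Lemma Fp_val_nat (p : nat) (pp : prime p) (a b : nat) :
  (a%:R : 'F_p) = b%:R -> (a %% p = b %% p)%N.
Proof. by move=> /(congr1 (@nat_of_ord _)); rewrite !(val_Fp_nat pp). Qed.

Lemma Fp_sq_inj (p h : nat) (pp : prime p) (hp : p = (2 * h + 1)%N) (a b : nat) :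
  (a <= h)%N -> (b <= h)%N -> (a%:R : 'F_p) ^+ 2 = b%:R ^+ 2 -> a = b.
Proof.
move=> ha hb e.
have : ((a%:R : 'F_p) - b%:R) * (a%:R + b%:R) = 0 by rewrite -subr_sqr e subrr.
move/eqP; rewrite mulf_eq0 => /orP [] /eqP.
  move/eqP; rewrite subr_eq0 => /eqP /(@Fp_val_nat p pp).
  rewrite !modn_small; lia.
rewrite -natrD => e2.
have : ((a + b) %% p = 0 %% p)%N by apply: (@Fp_val_nat p pp); rewrite e2.
rewrite !modn_small; lia.
Qed.

Lemma pigeon (p h : nat) (pp : prime p) (hp : p = (2 * h + 1)%N) :
  exists x y : nat, [/\ (x <= h)%N, (y <= h)%N & (p %| x ^ 2 + y ^ 2 + 1)%N].
Proof.
pose f (x : 'I_h.+1) : 'F_p := (x : nat)%:R ^+ 2.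
pose g (x : 'I_h.+1) : 'F_p := - 1 - (x : nat)%:R ^+ 2.
have fi : injective f.
  move=> x y /(@Fp_sq_inj p h pp hp) e; apply: val_inj; apply: e; rewrite -ltnS; exact: ltn_ord.
have gi : injective g.
  move=> x y e; apply: val_inj; apply: (@Fp_sq_inj p h pp hp); try (rewrite -ltnS; exact: ltn_ord).
  by move: e; rewrite /g => /addrI /oppr_inj.
pose A := [set f x | x in 'I_h.+1]. pose B := [set g x | x in 'I_h.+1].
have cA : #|A| = h.+1 by rewrite card_imset // card_ord.
have cB : #|B| = h.+1 by rewrite card_imset // card_ord.
have cU := max_card (mem (A :|: B)).
rewrite card_Fp // in cU.
have cI := cardsUI A B.
have : (0 < #|A :&: B|)%N.
  move: cU cI; rewrite cA cB => cU cI. rewrite /= in cU. move: cU cI; rewrite cardE /=. lia.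
rewrite card_gt0 => /set0Pn [z]; rewrite inE => /andP [/imsetP [x _ ->] /imsetP [y _ e]].
exists x, y; split; try (rewrite -ltnS; exact: ltn_ord).
have : ((x ^ 2 + y ^ 2 + 1)%N %:R : 'F_p) = 0.
  rewrite !natrD !natrX; move: e; rewrite /f /g => ->; ring.
move/(congr1 (@nat_of_ord _)); rewrite (val_Fp_nat pp) => /= h0.
by rewrite /dvdn h0.
Qed.

Lemma descent_all (p : nat) (pp : prime p) : forall n : nat, forall M : int,
  0 < M -> M <= n%:Z -> M < p%:Z ->
  (exists x1 x2 x3 x4, sq4 x1 x2 x3 x4 = M * p%:Z) ->
  exists a b c d, sq4 a b c d = p%:Z.
Proof.
elim=> [|n IH] M hM0 hMn hMp [x1 [x2 [x3 [x4 hx]]]]; first lia.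
have [M1|M1] := eqVneq M 1.
  by exists x1, x2, x3, x4; rewrite hx M1 mul1r.
have [r [r0 rM [w1 [w2 [w3 [w4 hw]]]]]] := @descent_step p M x1 x2 x3 x4 pp ltac:(lia) hMp hx.
apply: (IH r r0 _ _); [lia | lia | by exists w1, w2, w3, w4].
Qed.

Lemma four_sq_prime (p : nat) : prime p ->
  exists a b c d : int, p%:Z = a ^+ 2 + b ^+ 2 + c ^+ 2 + d ^+ 2.
Proof.
move=> pp.
suff [a [b [c [d h]]]] : exists a b c d, sq4 a b c d = p%:Z by exists a, b, c, d.
case: (even_prime pp) => [p2|podd].
  by exists 1, 1, 0, 0; rewrite p2.
have [h hp] : exists h, p = (2 * h + 1)%N.
  by exists p./2; rewrite -[p in LHS](odd_double_half p) podd; lia.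
have [x [y [hx hy hd]]] := @pigeon p h pp hp.
have [m hm] : exists m, (x ^ 2 + y ^ 2 + 1 = m * p)%N by exists ((x ^ 2 + y ^ 2 + 1) %/ p)%N; rewrite divnK.
apply: (@descent_all p pp m m%:Z).
- have : (0 < x ^ 2 + y ^ 2 + 1)%N by lia.
  rewrite hm; lia.
- lia.
- have e1 : (x ^ 2 <= h * h)%N by rewrite expnS expn1; apply: leq_mul.
  have e2 : (y ^ 2 <= h * h)%N by rewrite expnS expn1; apply: leq_mul.
  have h1 : (1 <= h)%N by have := prime_gt1 pp; lia.
  have : (m * p < p * p)%N.
    rewrite -hm hp; move: e1 e2 h1; rewrite !expnS ?expn0 ?muln1; clear; nia.
  rewrite ltn_pmul2r ?prime_gt0 //; lia.
- exists x%:Z, y%:Z, 1, 0; rewrite /sq4.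
  rewrite !expr2; move: hm; rewrite !expnS expn0 !muln1; clear; lia.
Qed.

Set Implicit Arguments. Unset Strict Implicit. Unset Printing Implicit Defensive.

Fixpoint tshift (A : Type) (n : nat) (t : GRing.term A) : GRing.term A :=
  match t with
  | GRing.Var i => @GRing.Var A (i + n)
  | GRing.Const x => GRing.Const x
  | GRing.NatConst k => @GRing.NatConst A k
  | GRing.Add t1 t2 => GRing.Add (tshift n t1) (tshift n t2)
  | GRing.Opp t1 => GRing.Opp (tshift n t1)
  | GRing.NatMul t1 k => GRing.NatMul (tshift n t1) k
  | GRing.Mul t1 t2 => GRing.Mul (tshift n t1) (tshift n t2)
  | GRing.Inv t1 => GRing.Inv (tshift n t1)
  | GRing.Exp t1 k => GRing.Exp (tshift n t1) k
  end.

Fixpoint fshift (A : Type) (n : nat) (g : GRing.formula A) : GRing.formula A :=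
  match g with
  | GRing.Bool b => @GRing.Bool A b
  | GRing.Equal t1 t2 => GRing.Equal (tshift n t1) (tshift n t2)
  | GRing.Unit t1 => GRing.Unit (tshift n t1)
  | GRing.And g1 g2 => GRing.And (fshift n g1) (fshift n g2)
  | GRing.Or g1 g2 => GRing.Or (fshift n g1) (fshift n g2)
  | GRing.Implies g1 g2 => GRing.Implies (fshift n g1) (fshift n g2)
  | GRing.Not g1 => GRing.Not (fshift n g1)
  | GRing.Exists i g1 => GRing.Exists (i + n) (fshift n g1)
  | GRing.Forall i g1 => GRing.Forall (i + n) (fshift n g1)
  end.

Fixpoint tlt (A : Type) (b : nat) (t : GRing.term A) : bool :=
  match t with
  | GRing.Var i => (i < b)%N
  | GRing.Const x => true
  | GRing.NatConst k => true
  | GRing.Add t1 t2 => tlt b t1 && tlt b t2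
  | GRing.Opp t1 => tlt b t1
  | GRing.NatMul t1 k => tlt b t1
  | GRing.Mul t1 t2 => tlt b t1 && tlt b t2
  | GRing.Inv t1 => tlt b t1
  | GRing.Exp t1 k => tlt b t1
  end.

Lemma eval_tshift (R : unitRingType) n (t : GRing.term Empty_set) (e e' : seq R) :
  (forall i, nth 0 e (i + n) = nth 0 e' i) ->
  GRing.eval e (tmap (@of_empty R) (tshift n t)) = GRing.eval e' (tmap (@of_empty R) t).
Proof. by move=> he; elim: t => //= [t1 -> t2 ->|t1 ->|t1 ->|t1 -> t2 ->|t1 ->|t1 ->]. Qed.

Lemma holds_fshift (R : unitRingType) n (f : ring_formula) : forall (e e' : seq R),
  (forall i, nth 0 e (i + n) = nth 0 e' i) ->
  (GRing.holds e (fmap (@of_empty R) (fshift n f)) <-> GRing.holds e' (fmap (@of_empty R) f)).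
Proof.
elim: f => //=.
- by move=> t1 t2 e e' he; rewrite !(eval_tshift _ he).
- by move=> t1 e e' he; rewrite !(eval_tshift _ he).
- by move=> f1 IH1 f2 IH2 e e' he; rewrite (IH1 _ _ he) (IH2 _ _ he).
- by move=> f1 IH1 f2 IH2 e e' he; rewrite (IH1 _ _ he) (IH2 _ _ he).
- by move=> f1 IH1 f2 IH2 e e' he; rewrite (IH1 _ _ he) (IH2 _ _ he).
- by move=> f1 IH1 e e' he; rewrite (IH1 _ _ he).
- move=> i f1 IH1 e e' he; split=> [[x hx]|[x hx]]; exists x; move: hx; apply IH1;
    by move=> j; rewrite !nth_set_nth /= eqn_add2r he.
- move=> i f1 IH1 e e' he; split=> hx x; move: (hx x); apply IH1;
    by move=> j; rewrite !nth_set_nth /= eqn_add2r he.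
Qed.

Lemma eval_irr (R : unitRingType) (b k : nat) (t : GRing.term Empty_set) (e : seq R) (x : R) :
  tlt b t -> (b <= k)%N ->
  GRing.eval (set_nth 0 e k x) (tmap (@of_empty R) t) = GRing.eval e (tmap (@of_empty R) t).
Proof.
move=> ht hk; elim: t ht => //=.
- by move=> i hi; rewrite nth_set_nth /=; case: eqP => //; lia.
- by move=> t1 IH1 t2 IH2 /andP [/IH1 -> /IH2 ->].
- by move=> t1 IH1 /IH1 ->.
- by move=> t1 IH1 n /IH1 ->.
- by move=> t1 IH1 t2 IH2 /andP [/IH1 -> /IH2 ->].
- by move=> t1 IH1 /IH1 ->.
- by move=> t1 IH1 n /IH1 ->.
Qed.

Definition NN : nat := 64.
Notation X i := (@GRing.Var Empty_set i).
Notation tc k := (@GRing.NatConst Empty_set k).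

Definition ZT_def (Zf : ring_formula) (t : GRing.term Empty_set) : ring_formula :=
  GRing.Exists NN (GRing.And (GRing.Equal (X NN) t) (fshift NN Zf)).
Fact ZT_key : unit. Proof. by []. Qed.
Definition ZT := locked_with ZT_key ZT_def.
Lemma ZT_unlock : ZT = ZT_def. Proof. exact: unlock. Qed.

Lemma nth_sn_eq (R : unitRingType) (e : seq R) k x : nth 0 (set_nth 0 e k x) k = x.
Proof. by rewrite nth_set_nth /= eqxx. Qed.
Lemma nth_sn_ne (R : unitRingType) (e : seq R) i k x : i != k -> nth 0 (set_nth 0 e k x) i = nth 0 e i.
Proof. by rewrite nth_set_nth /= => /negbTE ->. Qed.

Ltac nths := repeat (first [rewrite nth_sn_eq | rewrite nth_sn_ne; [|lia]]).

Lemma ZT_sem (R : fieldType) Zf (e : seq R) t : (size e <= NN)%N -> tlt NN t ->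
  (GRing.holds e (fmap (@of_empty R) (ZT Zf t)) <-> sZ Zf (GRing.eval e (tmap (@of_empty R) t))).
Proof.
move=> hs ht; rewrite ZT_unlock /ZT_def /sZ /sat /=.
have key : forall x, GRing.holds (set_nth 0 e NN x) (fmap (@of_empty R) (fshift NN Zf))
   <-> GRing.holds [:: x] (fmap (@of_empty R) Zf).
  move=> x; apply: holds_fshift => i.
  case: i => [|i]; first by rewrite add0n nth_sn_eq.
  rewrite nth_sn_ne; last by lia.
  by rewrite /= nth_nil nth_default //; lia.
split.
- move=> [x []]; rewrite nth_sn_eq (eval_irr _ _ ht) // => -> /key; done.
- move=> h; exists (GRing.eval e (tmap (@of_empty R) t)); split.
    by rewrite nth_sn_eq (eval_irr _ _ ht).
  by apply/key.
Qed.

Notation EV e t := (GRing.eval e (tmap (@of_empty _) t)).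

Definition NT Zf (t : GRing.term Empty_set) (s : nat) : ring_formula :=
  GRing.Exists s (GRing.Exists s.+1 (GRing.Exists s.+2 (GRing.Exists s.+3
   (GRing.And (GRing.And (ZT Zf (X s)) (GRing.And (ZT Zf (X s.+1))
       (GRing.And (ZT Zf (X s.+2)) (ZT Zf (X s.+3)))))
     (GRing.Equal t (GRing.Add (GRing.Add (GRing.Add (GRing.Exp (X s) 2) (GRing.Exp (X s.+1) 2))
                     (GRing.Exp (X s.+2) 2)) (GRing.Exp (X s.+3) 2))))))).
Fact NT_key : unit. Proof. by []. Qed.
Definition NTl := locked_with NT_key NT.
Lemma NT_unlock : NTl = NT. Proof. exact: unlock. Qed.

Lemma NT_sem (R : fieldType) Zf (e : seq R) t s : (size e <= NN)%N -> tlt s t -> (s.+4 <= NN)%N ->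
  (GRing.holds e (fmap (@of_empty R) (NTl Zf t s)) <-> sN Zf (EV e t)).
Proof.
move=> hs ht hsN; rewrite NT_unlock /NT /=.
split.
- move=> [a [b [c [d [[ha [hb [hc hd]]] he]]]]].
  move: ha hb hc hd; rewrite !ZT_sem /=; try (rewrite !size_set_nth; lia); try (simpl; lia).
  nths => ha hb hc hd.
  exists a, b, c, d; split; first by [].
  move: he; nths; rewrite !(eval_irr _ _ ht) //; lia.
- move=> [a [b [c [d [[ha hb hc hd] he]]]]].
  exists a, b, c, d; split; last first.
    by nths; rewrite !(eval_irr _ _ ht) //; lia.
  rewrite !ZT_sem /=; try (rewrite !size_set_nth; lia); try (simpl; lia).
  by nths.
Qed.

Lemma tlt_mono (v : GRing.term Empty_set) a b : tlt a v -> (a <= b)%N -> tlt b v.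
Proof.
move=> hv hab; elim: v hv => //=; first lia.
- by move=> v1 IH1 v2 IH2 /andP [/IH1 -> /IH2 ->].
- by move=> v1 IH1 v2 IH2 /andP [/IH1 -> /IH2 ->].
Qed.

Definition DvdT Zf (t u : GRing.term Empty_set) (s : nat) : ring_formula :=
  GRing.And (ZT Zf t) (GRing.And (ZT Zf u) (GRing.Exists s
    (GRing.And (ZT Zf (X s)) (GRing.And (GRing.Not (GRing.Equal (X s) (tc 0)))
       (GRing.Equal u (GRing.Mul (X s) t)))))).
Fact DvdT_key : unit. Proof. by []. Qed.
Definition DvdTl := locked_with DvdT_key DvdT.
Lemma DvdT_unlock : DvdTl = DvdT. Proof. exact: unlock. Qed.

Lemma DvdT_sem (R : fieldType) Zf (e : seq R) t u s : (size e <= NN)%N -> tlt s t -> tlt s u ->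
  (s < NN)%N ->
  (GRing.holds e (fmap (@of_empty R) (DvdTl Zf t u s)) <-> Defs.sdvd Zf (EV e t) (EV e u)).
Proof.
move=> hs ht hu hsN.
have hlt : forall v : GRing.term Empty_set, tlt s v -> tlt NN v.
  move=> v hv; apply: (@tlt_mono v s NN hv); lia.
rewrite DvdT_unlock /DvdT /=.
rewrite !ZT_sem //; try exact: hlt.
rewrite /Defs.sdvd; split.
- move=> [h1 [h2 [z [hz [hz0 he]]]]]; split=> //; split=> //; exists z.
  move: hz; rewrite ZT_sem /=; try (rewrite !size_set_nth; lia); try (simpl; lia).
  move: he hz0; nths; rewrite !(eval_irr _ _ ht) ?(eval_irr _ _ hu) // => he hz0 hz.
  by rewrite he; split=> //; split=> //; apply/eqP.
- move=> [h1 [h2 [z [hz [hz0 he]]]]]; split=> //; split=> //; exists z.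
  rewrite ZT_sem /=; try (rewrite !size_set_nth; lia); try (simpl; lia).
  nths; rewrite !(eval_irr _ _ ht) ?(eval_irr _ _ hu) //; split=> //; split=> //.
  by apply/eqP.
Qed.

Definition PrimeT Zf (t : GRing.term Empty_set) (s : nat) : ring_formula :=
  GRing.And (NTl Zf t s) (GRing.And (GRing.Not (GRing.Equal t (tc 1)))
   (GRing.Forall s (GRing.Implies (ZT Zf (X s)) (GRing.Implies (DvdTl Zf (X s) t s.+1)
     (GRing.Or (GRing.Equal (X s) (tc 1)) (GRing.Or (GRing.Equal (X s) (GRing.Opp (tc 1)))
       (GRing.Or (GRing.Equal (X s) t) (GRing.Equal (X s) (GRing.Opp t))))))))).
Fact PrimeT_key : unit. Proof. by []. Qed.
Definition PrimeTl := locked_with PrimeT_key PrimeT.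
Lemma PrimeT_unlock : PrimeTl = PrimeT. Proof. exact: unlock. Qed.

Lemma PrimeT_sem (R : fieldType) Zf (e : seq R) t s : (size e <= NN)%N -> tlt s t ->
  (s + 5 <= NN)%N ->
  (GRing.holds e (fmap (@of_empty R) (PrimeTl Zf t s)) <-> sprime Zf (EV e t)).
Proof.
move=> hs ht hsN.
have ht1 : tlt s.+1 t by apply: (@tlt_mono t s s.+1 ht); lia.
rewrite PrimeT_unlock /PrimeT /= NT_sem //; last lia.
rewrite /sprime ?mulr1n; split.
- move=> [h1 [h2 h3]]; split=> //; split; first by apply/eqP.
  move=> d hd hdd; have := h3 d.
  rewrite ZT_sem /=; try (rewrite !size_set_nth; lia); try (simpl; lia).
  rewrite DvdT_sem /=; try (rewrite !size_set_nth; lia); try (simpl; lia); try done.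
  nths; rewrite !(eval_irr _ _ ht) //. by move=> /(_ hd hdd).
- move=> [h1 [h2 h3]]; split=> //; split; first by apply/eqP.
  move=> d.
  rewrite ZT_sem /=; try (rewrite !size_set_nth; lia); try (simpl; lia).
  rewrite DvdT_sem /=; try (rewrite !size_set_nth; lia); try (simpl; lia); try done.
  nths; rewrite !(eval_irr _ _ ht) // ?mulr1n; exact: h3.
Qed.

Definition PowT Zf (p y : GRing.term Empty_set) (s : nat) : ring_formula :=
  GRing.And (NTl Zf y s) (GRing.Or (GRing.Equal y (tc 1))
   (GRing.Forall s (GRing.Implies (NTl Zf (X s) s.+1)
     (GRing.Implies (GRing.Not (GRing.Equal (X s) (tc 1)))
     (GRing.Implies (GRing.Not (GRing.Equal (X s) (GRing.Opp (tc 1))))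
     (GRing.Implies (DvdTl Zf (X s) y s.+1) (DvdTl Zf p (X s) s.+1))))))).
Fact PowT_key : unit. Proof. by []. Qed.
Definition PowTl := locked_with PowT_key PowT.
Lemma PowT_unlock : PowTl = PowT. Proof. exact: unlock. Qed.

Lemma PowT_sem (R : fieldType) Zf (e : seq R) p y s : (size e <= NN)%N -> tlt s p -> tlt s y ->
  (s + 5 <= NN)%N ->
  (GRing.holds e (fmap (@of_empty R) (PowTl Zf p y s)) <-> spowN Zf (EV e p) (EV e y)).
Proof.
move=> hs hp hy hsN.
have hp1 : tlt s.+1 p by apply: (@tlt_mono p s s.+1 hp); lia.
have hy1 : tlt s.+1 y by apply: (@tlt_mono y s s.+1 hy); lia.
rewrite PowT_unlock /PowT /= NT_sem //; last lia.
rewrite /spowN ?mulr1n.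
have key : forall z, GRing.holds (set_nth 0 e s z) (fmap (@of_empty R) (NTl Zf (X s) s.+1)) <-> sN Zf z.
  move=> z; rewrite NT_sem /=; try (rewrite !size_set_nth; lia); try (simpl; lia).
  by nths.
split.
- move=> [h1 [h2|h2]]; split=> //; [by left|right].
  move=> z hz hz1 hz2 hzy; have := h2 z.
  rewrite key !DvdT_sem /=; try (rewrite !size_set_nth; lia); try (simpl; lia); try done.
  nths; rewrite !(eval_irr _ _ hy) ?(eval_irr _ _ hp) // ?mulr1n.
  move=> /(_ hz); apply; [exact/eqP|exact/eqP|done].
- move=> [h1 [h2|h2]]; split=> //; [by left|right].
  move=> z; rewrite key !DvdT_sem /=; try (rewrite !size_set_nth; lia); try (simpl; lia); try done.
  nths; rewrite !(eval_irr _ _ hy) ?(eval_irr _ _ hp) // ?mulr1n.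
  move=> hz hz1 hz2; apply: h2 => //; exact/eqP.
Qed.

Definition DT Zf (p x y : GRing.term Empty_set) (s : nat) : ring_formula :=
  GRing.And (PowTl Zf p y s) (GRing.And (DvdTl Zf y x s) (GRing.Not (DvdTl Zf (GRing.Mul p y) x s))).

Lemma DT_sem (R : fieldType) Zf (e : seq R) p x y s : (size e <= NN)%N -> tlt s p -> tlt s x ->
  tlt s y -> (s + 5 <= NN)%N ->
  (GRing.holds e (fmap (@of_empty R) (DT Zf p x y s)) <->
   spowN Zf (EV e p) (EV e y) /\ Defs.sdvd Zf (EV e y) (EV e x) /\
   ~ Defs.sdvd Zf (EV e p * EV e y) (EV e x)).
Proof.
move=> hs hp hx hy hsN.
rewrite /DT /= PowT_sem // !DvdT_sem //=; try lia; by rewrite hp hy.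
Qed.

Definition SltT Zf (t u : GRing.term Empty_set) (s : nat) : ring_formula :=
  GRing.Exists s (GRing.Exists s.+1 (GRing.Exists s.+2 (GRing.Exists s.+3
  (GRing.And
    (GRing.And (ZT Zf (X s)) (GRing.And (ZT Zf (X s.+2))
      (GRing.And (GRing.And (NTl Zf (X s.+1) s.+4) (GRing.Not (GRing.Equal (X s.+1) (tc 0))))
      (GRing.And (GRing.And (NTl Zf (X s.+3) s.+4) (GRing.Not (GRing.Equal (X s.+3) (tc 0))))
       (GRing.And (GRing.Equal t (GRing.Mul (X s) (GRing.Inv (X s.+1))))
                  (GRing.Equal u (GRing.Mul (X s.+2) (GRing.Inv (X s.+3)))))))))
    (GRing.And (NTl Zf (GRing.Add (GRing.Mul (X s.+2) (X s.+1)) (GRing.Opp (GRing.Mul (X s) (X s.+3)))) s.+4)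
       (GRing.Not (GRing.Equal t u))))))).

Lemma SltT_sem (R : fieldType) Zf (e : seq R) t u s : (size e <= NN)%N -> tlt s t -> tlt s u ->
  (s + 8 <= NN)%N ->
  (GRing.holds e (fmap (@of_empty R) (SltT Zf t u s)) <-> slt Zf (EV e t) (EV e u)).
Proof.
move=> hs ht hu hsN.
rewrite /SltT /= /slt.
split.
- move=> [a1 [b1 [a2 [b2 [[ha1 [ha2 [[hb1 hb10] [[hb2 hb20] [et eu]]]]] [hn hne]]]]]].
  move: ha1 ha2 hb1 hb2 hn et eu hne.
  rewrite !ZT_sem /=; try (rewrite !size_set_nth; lia); try (simpl; lia).
  rewrite !NT_sem /=; try (rewrite !size_set_nth; lia); try (simpl; lia).
  move: hb10 hb20; nths; rewrite !(eval_irr _ _ ht) ?(eval_irr _ _ hu) //; try lia.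
  move=> hb10 hb20 ha1 ha2 hb1 hb2 hn et eu hne.
  exists a1, b1, a2, b2; split; first split=> //; try (split=> //; exact/eqP).
- move=> [a1 [b1 [a2 [b2 [[ha1 ha2 [hb1 hb10] [hb2 hb20] [et eu]] [hn hne]]]]]].
  exists a1, b1, a2, b2.
  rewrite !ZT_sem /=; try (rewrite !size_set_nth; lia); try (simpl; lia).
  rewrite !NT_sem /=; try (rewrite !size_set_nth; lia); try (simpl; lia).
  nths; rewrite !(eval_irr _ _ ht) ?(eval_irr _ _ hu) //; try lia.
  split; first (split=> //; split=> //; split; first (split=> //; exact/eqP)).
    split; first (split=> //; exact/eqP). by [].
  by split=> //; apply/eqP.
Qed.

Fact DT_key : unit. Proof. by []. Qed.
Definition DTl := locked_with DT_key DT.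
Lemma DTl_sem (R : fieldType) Zf (e : seq R) p x y s : (size e <= NN)%N -> tlt s p -> tlt s x ->
  tlt s y -> (s + 5 <= NN)%N ->
  (GRing.holds e (fmap (@of_empty R) (DTl Zf p x y s)) <->
   spowN Zf (EV e p) (EV e y) /\ Defs.sdvd Zf (EV e y) (EV e x) /\
   ~ Defs.sdvd Zf (EV e p * EV e y) (EV e x)).
Proof. rewrite /DTl unlock; exact: DT_sem. Qed.

Fact SltT_key : unit. Proof. by []. Qed.
Definition SltTl := locked_with SltT_key SltT.
Lemma SltTl_sem (R : fieldType) Zf (e : seq R) t u s : (size e <= NN)%N -> tlt s t -> tlt s u ->
  (s + 8 <= NN)%N ->
  (GRing.holds e (fmap (@of_empty R) (SltTl Zf t u s)) <-> slt Zf (EV e t) (EV e u)).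
Proof. rewrite /SltTl unlock; exact: SltT_sem. Qed.

Notation Tdiv a b := (GRing.Mul a (GRing.Inv b)).
Notation Tnz a := (GRing.Not (GRing.Equal a (tc 0))).

Definition Ssen Zf : ring_formula :=
  GRing.Forall 0 (GRing.Implies (Tnz (X 0)) (SltTl Zf (tc 0) (GRing.Mul (X 0) (X 0)) 1)).

Lemma Ssen_sem (R : fieldType) Zf :
  sat (R := R) [::] (Ssen Zf) <-> forall a : R, a <> 0 -> slt Zf 0 (a * a).
Proof.
rewrite /sat /Ssen /=; split=> h a; move: (h a); rewrite SltTl_sem //=.
Qed.

Definition E1sen Zf : ring_formula :=
  GRing.Forall 0 (GRing.Implies (Tnz (X 0)) (GRing.Exists 1 (GRing.Exists 2
   (GRing.And (ZT Zf (X 1)) (GRing.And (ZT Zf (X 2)) (GRing.And (Tnz (X 1))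
     (GRing.And (Tnz (X 2)) (GRing.Equal (X 0) (Tdiv (X 1) (X 2)))))))))).

Lemma E1sen_sem (R : fieldType) Zf :
  sat (R := R) [::] (E1sen Zf) <-> forall a : R, a <> 0 ->
    exists u v, [/\ sZ Zf u, sZ Zf v, u <> 0, v <> 0 & a = u / v].
Proof.
rewrite /sat /E1sen /=; split=> h a ha.
- have [u [v]] := h a ha; rewrite !ZT_sem //=.
  by move=> [h1 [h2 [h3 [h4 h5]]]]; exists u, v; split.
- have [u [v [h1 h2 h3 h4 h5]]] := h a ha; exists u, v.
  by rewrite !ZT_sem //=.
Qed.

Definition Dp Zf (R : fieldType) (p x y : R) :=
  spowN Zf p y /\ Defs.sdvd Zf y x /\ ~ Defs.sdvd Zf (p * y) x.

Definition E2sen Zf : ring_formula :=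
  GRing.Forall 0 (GRing.Implies (PrimeTl Zf (X 0) 3) (GRing.Forall 1
    (GRing.Implies (ZT Zf (X 1)) (GRing.Implies (Tnz (X 1))
      (GRing.Exists 2 (DTl Zf (X 0) (X 1) (X 2) 3)))))).

Lemma E2sen_sem (R : fieldType) Zf :
  sat (R := R) [::] (E2sen Zf) <-> forall p : R, sprime Zf p -> forall x, sZ Zf x -> x <> 0 ->
    exists y, Dp Zf p x y.
Proof.
rewrite /sat /E2sen /=; split=> h p.
- move=> hp x hx hx0; have := h p; rewrite PrimeT_sem //= => /(_ hp x).
  rewrite ZT_sem //= => /(_ hx hx0) [y]; rewrite DTl_sem //= => hy.
  by exists y.
- rewrite PrimeT_sem //= => hp x; rewrite ZT_sem //= => hx hx0.
  have [y hy] := h p hp x hx hx0; exists y; rewrite DTl_sem //=.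
Qed.

Definition Msen Zf : ring_formula :=
  GRing.Forall 0 (GRing.Forall 1 (GRing.Forall 2 (GRing.Forall 3
  (GRing.Implies
    (GRing.And (ZT Zf (X 0)) (GRing.And (ZT Zf (X 1)) (GRing.And (ZT Zf (X 2))
     (GRing.And (ZT Zf (X 3)) (GRing.And (Tnz (X 0)) (GRing.And (Tnz (X 1))
     (GRing.And (Tnz (X 2)) (Tnz (X 3)))))))))
  (GRing.Implies
    (GRing.Forall 4 (GRing.Implies (PrimeTl Zf (X 4) 10)
      (GRing.Exists 5 (GRing.Exists 6 (GRing.Exists 7 (GRing.Exists 8
        (GRing.And (DTl Zf (X 4) (X 0) (X 5) 10) (GRing.And (DTl Zf (X 4) (X 1) (X 6) 10)
         (GRing.And (DTl Zf (X 4) (X 2) (X 7) 10) (GRing.And (DTl Zf (X 4) (X 3) (X 8) 10)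
          (GRing.Equal (Tdiv (X 5) (X 6)) (Tdiv (X 7) (X 8)))))))))))))
  (GRing.Implies (SltTl Zf (tc 0) (GRing.Mul (Tdiv (X 0) (X 1)) (Tdiv (X 2) (X 3))) 10)
     (GRing.Equal (Tdiv (X 0) (X 1)) (Tdiv (X 2) (X 3))))))))).

Definition Mmeaning (R : fieldType) Zf :=
  forall u0 v0 u1 v1 : R, [/\ sZ Zf u0, sZ Zf v0, sZ Zf u1 & sZ Zf v1] ->
    [/\ u0 <> 0, v0 <> 0, u1 <> 0 & v1 <> 0] ->
    (forall p, sprime Zf p -> exists y1 y2 y3 y4,
       [/\ Dp Zf p u0 y1, Dp Zf p v0 y2, Dp Zf p u1 y3, Dp Zf p v1 y4 & y1 / y2 = y3 / y4]) ->
    slt Zf 0 ((u0 / v0) * (u1 / v1)) -> u0 / v0 = u1 / v1.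

Lemma Msen_sem (R : fieldType) Zf : sat (R := R) [::] (Msen Zf) <-> Mmeaning R Zf.
Proof.
rewrite /sat /Msen /Mmeaning /=; split=> h u0 v0 u1 v1.
- move=> [z0 z1 z2 z3] [n0 n1 n2 n3] hp hs.
  have := h u0 v0 u1 v1; rewrite !ZT_sem //= SltTl_sem //=.
  move=> /(_ (conj z0 (conj z1 (conj z2 (conj z3 (conj n0 (conj n1 (conj n2 n3))))))));
  apply=> //.
  move=> p; rewrite PrimeT_sem //= => /hp [y1 [y2 [y3 [y4 [d1 d2 d3 d4 de]]]]].
  exists y1, y2, y3, y4; rewrite !DTl_sem //=.
- rewrite !ZT_sem //= SltTl_sem //=.
  move=> [z0 [z1 [z2 [z3 [n0 [n1 [n2 n3]]]]]]] hp hs.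
  apply: h => //.
  move=> p hpp; have := hp p; rewrite PrimeT_sem //= => /(_ hpp) [y1 [y2 [y3 [y4]]]].
  rewrite !DTl_sem //= => [[d1 [d2 [d3 [d4 de]]]]].
  by exists y1, y2, y3, y4; split.
Qed.

Section Q.
Variable Zf : ring_formula.
Hypothesis hZ : defines_Z_in_Q Zf.

Lemma intr_natQ (n : nat) : (n%:Z)%:~R = n%:R :> rat.
Proof. by []. Qed.

Lemma intrX2 (z : int) : (z ^+ 2)%:~R = (z%:~R : rat) ^+ 2.
Proof. by rewrite !expr2 intrM. Qed.

Lemma sZ_rat (x : rat) : sZ Zf x <-> exists z : int, x = z%:~R.
Proof. exact: hZ. Qed.

Lemma sZ_int (z : int) : sZ Zf (z%:~R : rat).
Proof. by apply/sZ_rat; exists z. Qed.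

Lemma sZ_nat (n : nat) : sZ Zf (n%:R : rat).
Proof. by rewrite -intr_natQ; apply: sZ_int. Qed.

Lemma sN_rat (x : rat) : sN Zf x -> exists n : nat, x = n%:R.
Proof.
move=> [a [b [c [d [[ha hb hc hd] ->]]]]].
move: ha hb hc hd => /sZ_rat [a' ->] /sZ_rat [b' ->] /sZ_rat [c' ->] /sZ_rat [d' ->].
exists (absz (a' ^+ 2 + b' ^+ 2 + c' ^+ 2 + d' ^+ 2)).
rewrite -intr_natQ gez0_abs; last by rewrite !addr_ge0 ?sqr_ge0.
by rewrite !intrD !intrX2.
Qed.

Lemma sN_ge0 (x : rat) : sN Zf x -> 0 <= x.
Proof. by move=> /sN_rat [n ->]; rewrite ler0n. Qed.

Lemma sN_sq4 (a b c d : int) : sN Zf ((a ^+ 2 + b ^+ 2 + c ^+ 2 + d ^+ 2)%:~R : rat).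
Proof.
exists a%:~R, b%:~R, c%:~R, d%:~R; split; first by split; apply: sZ_int.
by rewrite !intrD !intrX2.
Qed.

Lemma sN_mulsq (x : rat) (w : int) : sN Zf x -> sN Zf ((w%:~R) ^+ 2 * x).
Proof.
move=> [a [b [c [d [[ha hb hc hd] ->]]]]].
move: ha hb hc hd => /sZ_rat [a' ->] /sZ_rat [b' ->] /sZ_rat [c' ->] /sZ_rat [d' ->].
have := sN_sq4 (w * a') (w * b') (w * c') (w * d').
by rewrite !intrD !intrX2 !intrM; congr sN; ring.
Qed.

Lemma sN_nsq (w : int) : sN Zf ((w%:~R) ^+ 2 : rat).
Proof.
by have := sN_sq4 w 0 0 0; rewrite !intrD !intrX2 !expr0n /= !addr0.
Qed.

Lemma sN_prime (q : nat) : prime q -> sN Zf (q%:R : rat).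
Proof.
move=> /four_sq_prime [a [b [c [d h]]]].
by rewrite -intr_natQ h; apply: sN_sq4.
Qed.
End Q.

Section Q2.
Variable Zf : ring_formula.
Hypothesis hZ : defines_Z_in_Q Zf.

Lemma sN_pow (q k : nat) : sN Zf (q%:R : rat) -> sN Zf ((q ^ k)%:R : rat).
Proof.
move=> hq; rewrite -(odd_double_half k).
set j := k./2; case: (odd k) => /=.
- rewrite add1n expnS -addnn expnD natrM natrM -expr2 mulrC -intr_natQ.
  by apply: sN_mulsq.
- rewrite add0n -addnn expnD natrM -expr2 -intr_natQ.
  have := @sN_nsq Zf hZ (q ^ j)%:Z; by [].
Qed.

Lemma sdvd_int (d z : int) : z != 0 ->
  (Defs.sdvd Zf (d%:~R : rat) (z%:~R) <-> (d %| z)%Z).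
Proof.
move=> hz; split.
- move=> [_ [_ [w [/(sZ_rat hZ) [w' ->] [_ he]]]]].
  apply/dvdzP; exists w'; apply: (@intr_inj rat).
  by rewrite he intrM.
- move=> hd; split; first exact: sZ_int.
  split; first exact: sZ_int.
  exists (z %/ d)%Z%:~R; split; first exact: sZ_int.
  split.
    rewrite intr_eq0; apply/eqP => h0.
    by move: hz; rewrite -(divzK hd) h0 mul0r eqxx.
  by rewrite -intrM divzK.
Qed.

Lemma slt_lt (x y : rat) : slt Zf x y -> x < y.
Proof.
move=> [a1 [b1 [a2 [b2 [[ha1 ha2 [hb1 hb10] [hb2 hb20] [ex ey]] [hn hne]]]]]].
have g1 := sN_ge0 hZ hb1; have g2 := sN_ge0 hZ hb2; have g3 := sN_ge0 hZ hn.
have p1 : 0 < b1 by rewrite lt_def hb10.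
have p2 : 0 < b2 by rewrite lt_def hb20.
have : 0 <= y - x.
  have -> : y - x = (a2 * b1 - a1 * b2) / (b1 * b2).
    by rewrite ex ey; field; apply/andP; split.
  by apply: divr_ge0 => //; apply: mulr_ge0.
rewrite subr_ge0 => hle; rewrite lt_def hle andbT eq_sym; exact: hne.
Qed.
End Q2.

Section Q3.
Variable Zf : ring_formula.
Hypothesis hZ : defines_Z_in_Q Zf.

Lemma dvdz_natl (m : nat) (z : int) : ((m%:Z) %| z)%Z = (m %| `|z|)%N.
Proof. by []. Qed.

Lemma sdvd_nat (m n : nat) : (0 < n)%N ->
  (Defs.sdvd Zf (m%:R : rat) (n%:R) <-> (m %| n)%N).
Proof.
move=> hn; rewrite -!intr_natQ (sdvd_int hZ) //; last by rewrite eqz_nat; lia.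
Qed.

Lemma sprime_rat (p : rat) : sprime Zf p -> p = 0 \/ exists q, prime q /\ p = q%:R.
Proof.
move=> [/(sN_rat hZ) [n ->] [h1 hd]].
case: (posnP n) => [->|n0]; [by left|right].
exists n; split => //.
have n1 : n != 1%N by apply: contra h1 => /eqP ->.
apply/primeP; split; first lia.
move=> d hdn.
have := hd d%:R (sZ_nat hZ d) (proj2 (sdvd_nat _ n0) hdn).
have g0 := ler0n rat d; have g1 := ltr0n rat n; rewrite n0 in g1.
move=> [|[|[|]]].
- by move/eqP; rewrite pnatr_eq1 => ->.
- move=> h; exfalso; move: g0; rewrite h; lra.
- by move/eqP; rewrite eqr_nat => ->; rewrite orbT.
- move=> h; exfalso; move: g0 g1; rewrite h; lra.
Qed.

Lemma sprime_of_prime (q : nat) : prime q -> sprime Zf (q%:R : rat).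
Proof.
move=> pq; split; first exact: (sN_prime hZ).
split; first by rewrite pnatr_eq1; have := prime_gt1 pq; lia.
move=> d /(sZ_rat hZ) [e ->].
rewrite -intr_natQ (sdvd_int hZ); last by rewrite eqz_nat; have := prime_gt1 pq; lia.
rewrite dvdz_natl /= => /(primeP pq).2 /orP [] /eqP he.
- have : e = 1 \/ e = -1 by lia.
  move=> [->|->]; [by left | right; left; by rewrite rmorphN1].
- have : e = q%:Z \/ e = - q%:Z by lia.
  by move=> [->|->]; [right; right; left | right; right; right; rewrite rmorphN].
Qed.

Lemma Dp_unique (q : nat) (z : int) (y : rat) : prime q -> z != 0 ->
  Dp Zf (q%:R) (z%:~R) y -> y = (q ^ logn q `|z|)%:R.
Proof.
move=> pq hz [[/(sN_rat hZ) [m ->] hy] [hdv hnd]].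
have az : (0 < `|z|)%N by rewrite absz_gt0.
move: hdv; rewrite -intr_natQ (sdvd_int hZ) // dvdz_natl => hdv.
have m0 : (0 < m)%N.
  case: (posnP m) => // m0; move: hdv; rewrite m0 dvd0n; lia.
have hm : m = (q ^ logn q m)%N.
  case: hy => [/eqP|hy].
    by rewrite pnatr_eq1 => /eqP ->; rewrite logn1.
  have [m' cm' em] := pfactor_coprime pq m0.
  suff m'1 : m' = 1%N by rewrite {1}em m'1 mul1n.
  have m'0 : (0 < m')%N by move: m0; rewrite em; case: (m') => //.
  apply/eqP; apply/negPn/negP => m'n1.
  have m'g : (1 < m')%N by lia.
  set r := pdiv m'.
  have pr : prime r by apply: pdiv_prime.
  have rm' : (r %| m')%N by apply: pdiv_dvd.
  have rm : (r %| m)%N by rewrite em; apply: dvdn_mulr.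
  have := hy r%:R (sN_prime hZ pr).
  have r1 : r%:R != 1 :> rat by rewrite pnatr_eq1; have := prime_gt1 pr; lia.
  have r2 : r%:R != -1 :> rat.
    apply/eqP => h; have := ler0n rat r; rewrite h; lra.
  move=> /(_ r1 r2 (proj2 (sdvd_nat _ m0) rm)).
  rewrite sdvd_nat ?prime_gt0 // dvdn_prime2 // => /eqP qr.
  by move: cm'; rewrite qr prime_coprime // rm'.
set j := logn q m in hm.
have jL : (j <= logn q `|z|)%N by rewrite -pfactor_dvdn // -hm.
move: hnd; rewrite hm -natrM -expnS -[((q ^ j.+1)%:R)]intr_natQ (sdvd_int hZ) // dvdz_natl pfactor_dvdn // => hnd.
have -> : logn q `|z| = j by lia.
by rewrite -hm.
Qed.

Lemma Dp_exists (p : rat) (z : int) : sprime Zf p -> z != 0 -> exists y, Dp Zf p (z%:~R) y.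
Proof.
move=> hp hz.
have az : (0 < `|z|)%N by rewrite absz_gt0.
case: (sprime_rat hp) => [p0|[q [pq ep]]].
- exists 1; split.
    split; last by left.
    by have := @sN_nsq Zf hZ 1; rewrite expr1n.
  rewrite p0 mul0r -[1](intr_natQ 1) -[0](intr_natQ 0) !(sdvd_int hZ) //.
  by rewrite dvd1z dvdz_natl dvd0n; split=> //; lia.
- have hqN : sN Zf (q%:R : rat) by rewrite -ep; case: hp.
  set L := logn q `|z|.
  exists (q ^ L)%:R; split.
    split; first exact: sN_pow.
    right=> w /(sN_rat hZ) [n ->] hn1 _.
    have qL : (0 < q ^ L)%N by rewrite expn_gt0 prime_gt0.
    rewrite sdvd_nat // => /(dvdn_pfactor _ _ pq) [i iL ni].
    have i0 : (0 < i)%N.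
      case: (posnP i) => // i0; move: hn1; rewrite ni i0 expn0 eqxx //.
    rewrite ep sdvd_nat; last by rewrite ni expn_gt0 prime_gt0.
    by rewrite ni dvdn_exp.
  rewrite ep -natrM -expnS -!intr_natQ !(sdvd_int hZ) // !dvdz_natl !pfactor_dvdn //.
  split=> //; lia.
Qed.
End Q3.

Section Q4.
Variable Zf : ring_formula.
Hypothesis hZ : defines_Z_in_Q Zf.

Lemma Q_S (a : rat) : a <> 0 -> slt Zf 0 (a * a).
Proof.
move=> ha.
have ea := divq_num_den a.
set u := numq a in ea; set v := denq a in ea.
have v0 : (v%:~R : rat) != 0 by rewrite intr_eq0 denq_neq0.
exists 0, 1, (u%:~R ^+ 2), (v%:~R ^+ 2); split; first split.
- by have := sZ_int hZ 0.
- by rewrite -intrX2; apply: sZ_int.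
- by split; [have := @sN_nsq Zf hZ 1; rewrite expr1n | exact: oner_neq0].
- by split; [exact: sN_nsq | rewrite expf_neq0].
- by split; [rewrite mul0r | rewrite -ea; field].
split.
- by rewrite mul0r subr0 mulr1; apply: sN_nsq.
- by rewrite eq_sym mulf_neq0 //; apply/eqP.
Qed.

Lemma Q_E1 (a : rat) : a <> 0 -> exists u v, [/\ sZ Zf u, sZ Zf v, u <> 0, v <> 0 & a = u / v].
Proof.
move=> ha.
exists (numq a)%:~R, (denq a)%:~R; split; try exact: sZ_int.
- by apply/eqP; rewrite intr_eq0 numq_eq0; apply/eqP.
- by apply/eqP; rewrite intr_eq0 denq_neq0.
- by rewrite divq_num_den.
Qed.

Lemma Q_E2 (p : rat) : sprime Zf p -> forall x, sZ Zf x -> x <> 0 -> exists y, Dp Zf p x y.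
Proof.
move=> hp x /(sZ_rat hZ) [z ->] hz; apply: (Dp_exists hZ hp).
by apply: contra_not_neq hz => ->.
Qed.

Lemma Q_M : Mmeaning rat Zf.
Proof.
move=> u0 v0 u1 v1 [].
move=> /(sZ_rat hZ) [a ->] /(sZ_rat hZ) [b ->] /(sZ_rat hZ) [c ->] /(sZ_rat hZ) [d ->].
move=> [ha hb hc hd] hp hs.
have nz : forall z : int, (z%:~R : rat) <> 0 -> z != 0.
  by move=> z hz; apply/eqP => h; apply: hz; rewrite h.
have a0 := nz _ ha; have b0 := nz _ hb; have c0 := nz _ hc; have d0 := nz _ hd.
have hlog : forall q, logn q (`|a| * `|d|) = logn q (`|c| * `|b|).
  move=> q; case pq : (prime q); last by rewrite lognE pq /= [in RHS]lognE pq.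
  have [y1 [y2 [y3 [y4 [D1 D2 D3 D4 E]]]]] := hp _ (sprime_of_prime hZ pq).
  move: E; rewrite (Dp_unique hZ pq a0 D1) (Dp_unique hZ pq b0 D2).
  rewrite (Dp_unique hZ pq c0 D3) (Dp_unique hZ pq d0 D4).
  have nzq : forall k, ((q ^ k)%:R : rat) != 0.
    by move=> k; rewrite pnatr_eq0 expn_eq0 negb_and; apply/orP; left; rewrite -lt0n prime_gt0.
  move/eqP; rewrite eqr_div ?nzq // -!natrM eqr_nat -!expnD eqn_exp2l ?prime_gt1 // => /eqP h.
  rewrite !lognM ?absz_gt0 //; lia.
have habs : (`|a| * `|d| = `|c| * `|b|)%N.
  by apply: eqn_from_log; rewrite ?muln_gt0 ?absz_gt0 ?a0 ?d0 ?c0 ?b0.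
have hpos := slt_lt hZ hs.
have hP : a * d = c * b \/ a * d = - (c * b).
  move: habs; rewrite -!abszM; move: (a * d) (c * b) => P Q; lia.
have bR : (b%:~R : rat) != 0 by apply/eqP.
have dR : (d%:~R : rat) != 0 by apply/eqP.
have key : a%:~R / b%:~R - c%:~R / d%:~R = ((a * d)%:~R - (c * b)%:~R) / (b%:~R * d%:~R) :> rat.
  by rewrite !intrM; field; apply/andP.
case: hP => hP.
- by apply/eqP; rewrite -subr_eq0 key hP subrr mul0r.
- exfalso.
  have key2 : a%:~R / b%:~R = - (c%:~R / d%:~R) :> rat.
    apply/eqP; rewrite -subr_eq0 opprK.
    have -> : a%:~R / b%:~R + c%:~R / d%:~R = ((a * d)%:~R + (c * b)%:~R) / (b%:~R * d%:~R) :> rat.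
      by rewrite !intrM; field; apply/andP.
    by rewrite hP intrN addNr mul0r.
  move: hpos; rewrite key2 mulNr.
  have := sqr_ge0 (c%:~R / d%:~R : rat); rewrite expr2; lra.
Qed.
End Q4.

Theorem theorem3p2 (F : fieldType) (Zf : ring_formula)
  (hF : elem_equiv_Q F) (hZ : defines_Z_in_Q Zf)
  (a0 a1 : F) (h0 : a0 != 0) (h1 : a1 != 0) :
  a0 = a1 <->
  ((forall p : F, sprime Zf p -> dp Zf p a0 = dp Zf p a1) /\
   slt Zf 0 (a0 * a1)).
Proof.
have tS : forall a : F, a <> 0 -> slt Zf 0 (a * a).
  apply/(@Ssen_sem F Zf)/(hF (Ssen Zf))/(@Ssen_sem rat Zf).
  exact: (Q_S hZ).
have tE1 : forall a : F, a <> 0 ->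
    exists u v, [/\ sZ Zf u, sZ Zf v, u <> 0, v <> 0 & a = u / v].
  apply/(@E1sen_sem F Zf)/(hF (E1sen Zf))/(@E1sen_sem rat Zf).
  exact: (Q_E1 hZ).
have tE2 : forall p : F, sprime Zf p -> forall x, sZ Zf x -> x <> 0 -> exists y, Dp Zf p x y.
  apply/(@E2sen_sem F Zf)/(hF (E2sen Zf))/(@E2sen_sem rat Zf).
  exact: (Q_E2 hZ).
have tM : Mmeaning F Zf.
  apply/(@Msen_sem F Zf)/(hF (Msen Zf))/(@Msen_sem rat Zf).
  exact: (Q_M hZ).
split.
  move=> <-; split=> //; apply: tS; exact/eqP.
move=> [hdp hs].
pose spec (a : F) := (fun ab : F * F => [/\ sZ Zf ab.1, sZ Zf ab.2, ab.1 != 0, ab.2 != 0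
                                  & a = ab.1 / ab.2]).
have hspec : forall a : F, a != 0 -> spec a (epsilon (inhabits (0, 0)) (spec a)).
  move=> a ha; apply: epsilon_spec.
  have ha2 : a <> 0 by apply/eqP.
  have [u [v [hu hv hu0 hv0 he]]] := tE1 a ha2.
  by exists (u, v); split => //; apply/eqP.
have hdpZ : forall p x : F, sprime Zf p -> sZ Zf x -> x != 0 -> Dp Zf p x (dpZ Zf p x).
  move=> p x hp hx hx0; rewrite /dpZ; apply: epsilon_spec.
  by apply: tE2 => //; apply/eqP.
have [z0 w0 z00 w00 e0] := hspec a0 h0.
have [z1 w1 z10 w10 e1] := hspec a1 h1.
set ab0 := epsilon (inhabits (0, 0)) (spec a0) in z0 w0 z00 w00 e0.
set ab1 := epsilon (inhabits (0, 0)) (spec a1) in z1 w1 z10 w10 e1.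
rewrite e0 e1; apply: tM.
- by split.
- by split; apply/eqP.
- move=> p hp.
  exists (dpZ Zf p ab0.1), (dpZ Zf p ab0.2), (dpZ Zf p ab1.1), (dpZ Zf p ab1.2).
  split; try by apply: hdpZ.
  exact: (hdp p hp).
- by rewrite -e0 -e1.
Qed.
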